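(* Let $A$ be a physical system of dimension $m$ whose Hamiltonian has a non-degenerate Bohr spectrum, with energy eigenbasis $\{|x\rangle\}_{x\in[m]}$. Let $\rho=\sum_{x,x'}r_{xx'}|x\rangle\langle x'|$ and $\sigma=\sum_{x,x'}s_{xx'}|x\rangle\langle x'|$ be density matrices on $A$, and suppose $r_{xx'}\neq0$ for all $x,x'\in[m]$. Then there exists a time-translation covariant channel $\mathcal{E}:A\to A$ with $\sigma=\mathcal{E}(\rho)$ if and only if the $m\times m$ matrix $Q$ with entries $$q_{xy}=\begin{cases}\min\left\{1,\frac{s_{xx}}{r_{xx}}\right\}&\text{if }x=y,\\ \frac{s_{xy}}{r_{xy}}&\text{otherwise},\end{cases}$$ is positive semidefinite.
   Context: The Hamiltonian $H^A=\sum_x a_x|x\rangle\langle x|$ has a non-degenerate Bohr spectrum if for all $x,y,x',y'\in[m]$: $a_x-a_y=a_{x'}-a_{y'}$ holds iff ($x=x'$ and $y=y'$) or ($x=y$ and $x'=y'$). A channel $\mathcal{E}:A\to A$ is time-translation covariant if $\mathcal{E}(e^{-iH^At}\rho e^{iH^At})=e^{-iH^At}\mathcal{E}(\rho)e^{iH^At}$ for all $t\in\mathbb{R}$ and all states $\rho$. *)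

(* Defs.v *)
From mathcomp Require Import all_boot all_order all_algebra.
From mathcomp Require Import reals trigo.
From mathcomp.real_closed Require Import complex.
Set Implicit Arguments. Unset Strict Implicit. Unset Printing Implicit Defensive.
Import Order.TTheory GRing.Theory Num.Theory.
Local Open Scope ring_scope.
Local Open Scope complex_scope.

Section QDefs.
Variable R : realType.
Local Notation C := (R[i]).

Definition adjmx (p q : nat) (A : 'M[C]_(p, q)) : 'M[C]_(q, p) :=
  (map_mx conjc A)^T.

Definition psd (n : nat) (A : 'M[C]_n) : Prop :=
  adjmx A = A /\ forall v : 'cV[C]_n, 0 <= (adjmx v *m A *m v) 0 0.

Definition density (m : nat) (rho : 'M[C]_m) : Prop :=
  psd rho /\ \tr rho = 1.

Definition expi (theta : R) : C := cos theta +i* sin theta.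

(* Hamiltonian H = sum_x a_x |x><x| in the standard (energy) basis;
   time evolution U_t = e^{-iHt} = diag(e^{-i a_x t}) *)
Definition evol (m : nat) (a : 'I_m -> R) (t : R) : 'M[C]_m :=
  diag_mx (\row_x expi (- (a x * t))).

Definition nondeg_bohr (m : nat) (a : 'I_m -> R) : Prop :=
  forall x y x' y' : 'I_m,
    a x - a y = a x' - a y' <-> ((x = x' /\ y = y') \/ (x = y /\ x' = y')).

(* complete positivity: for every k, id_k (x) E maps positive block
   matrices (elements of M_k (x) M_m written as k x k block matrices)
   to positive block matrices *)
Definition completely_positive (m : nat) (E : 'M[C]_m -> 'M[C]_m) : Prop :=
  forall (k : nat) (X : 'I_k -> 'I_k -> 'M[C]_m),
    psd (\mxblock_(i < k, j < k) X i j) ->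
    psd (\mxblock_(i < k, j < k) E (X i j)).

Definition trace_preserving (m : nat) (E : 'M[C]_m -> 'M[C]_m) : Prop :=
  forall X : 'M[C]_m, \tr (E X) = \tr X.

Definition channel (m : nat) (E : {linear 'M[C]_m -> 'M[C]_m}) : Prop :=
  completely_positive E /\ trace_preserving E.

Definition tt_covariant (m : nat) (a : 'I_m -> R) (E : 'M[C]_m -> 'M[C]_m)
  : Prop :=
  forall (t : R) (rho : 'M[C]_m), density rho ->
    E (evol a t *m rho *m adjmx (evol a t))
    = evol a t *m E rho *m adjmx (evol a t).

Definition Qmx (m : nat) (r s : 'M[C]_m) : 'M[C]_m :=
  \matrix_(x, y) (if x == y then Order.min 1 (s x x / r x x)
                  else s x y / r x y).

End QDefs.

(* Main.v *)
Require Import Defs.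
From HB Require Import structures.
From mathcomp Require Import all_boot all_order all_algebra.
From mathcomp Require Import reals trigo.
From mathcomp.real_closed Require Import complex.
From mathcomp Require Import ring sesquilinear spectral.
Set Implicit Arguments. Unset Strict Implicit. Unset Printing Implicit Defensive.
Import Order.TTheory GRing.Theory Num.Theory.
Local Open Scope ring_scope.
Local Open Scope complex_scope.

Section Basic.
Variable R : realType.
Local Notation C := (R[i]).

Lemma adjmxE p q (A : 'M[C]_(p, q)) i j : adjmx A i j = conjc (A j i).
Proof. by rewrite !mxE. Qed.

Lemma adjmxK p q (A : 'M[C]_(p, q)) : adjmx (adjmx A) = A.
Proof. by apply/matrixP => i j; rewrite !adjmxE conjcK. Qed.

Lemma adjmx_mul p q r (A : 'M[C]_(p, q)) (B : 'M[C]_(q, r)) :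
  adjmx (A *m B) = adjmx B *m adjmx A.
Proof.
apply/matrixP => i j. rewrite adjmxE !mxE rmorph_sum; apply: eq_bigr => k _.
by rewrite !mxE rmorphM mulrC.
Qed.

Lemma adjmxD p q (A B : 'M[C]_(p, q)) : adjmx (A + B) = adjmx A + adjmx B.
Proof. by apply/matrixP => i j; rewrite !mxE ?adjmxE rmorphD. Qed.

Lemma adjmx0 p q : adjmx (0 : 'M[C]_(p, q)) = 0.
Proof. by apply/matrixP => i j; rewrite adjmxE !mxE rmorph0. Qed.

Lemma adjmxZ p q c (A : 'M[C]_(p, q)) : adjmx (c *: A) = conjc c *: adjmx A.
Proof. by apply/matrixP => i j; rewrite !mxE ?adjmxE rmorphM. Qed.

Lemma adjmx_sum p q (I : finType) (F : I -> 'M[C]_(p, q)) :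
  adjmx (\sum_l F l) = \sum_l adjmx (F l).
Proof.
apply: (big_rec2 (fun a b => adjmx a = b)); first exact: adjmx0.
by move=> l a b _ <-; rewrite adjmxD.
Qed.

Lemma adj_diag n (d : 'rV[C]_n) : adjmx (diag_mx d) = diag_mx (map_mx conjc d).
Proof.
apply/matrixP => i j; rewrite !mxE eq_sym.
case: (eqVneq i j) => [->|ne]; rewrite ?eqxx ?mulr1n //.
by rewrite !mulr0n; apply/eqP; rewrite conjc_eq0.
Qed.

Lemma conjcM (x y : C) : conjc (x * y) = conjc x * conjc y.
Proof. exact: rmorphM. Qed.

Lemma cmul_ge0 (x : C) : 0 <= conjc x * x.
Proof. rewrite mulrC; exact: mulcJ_ge0. Qed.

Lemma quad_ge0 n (v : 'cV[C]_n) : 0 <= (adjmx v *m v) 0 0.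
Proof.
rewrite !mxE; apply: sumr_ge0 => i _; rewrite adjmxE; first [exact: cmul_ge0 | exact: mulcJ_ge0].
Qed.

Lemma psd0 n : psd (0 : 'M[C]_n).
Proof. by split; [rewrite adjmx0 | move=> v; rewrite mulmx0 mul0mx mxE]. Qed.

Lemma psdD n (A B : 'M[C]_n) : psd A -> psd B -> psd (A + B).
Proof.
move=> [hA qA] [hB qB]; split; first by rewrite adjmxD hA hB.
move=> v; rewrite mulmxDr mulmxDl mxE; exact: addr_ge0.
Qed.

Lemma psd_sum n (I : finType) (F : I -> 'M[C]_n) :
  (forall l, psd (F l)) -> psd (\sum_l F l).
Proof.
move=> H; apply: (big_ind (fun A => psd A)); [exact: psd0 | exact: psdD | by []].
Qed.

Lemma psd_congr n p (K : 'M[C]_(p, n)) (A : 'M[C]_n) :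
  psd A -> psd (K *m A *m adjmx K).
Proof.
move=> [hA qA]; split; first by rewrite !adjmx_mul adjmxK hA mulmxA.
move=> v; have := qA (adjmx K *m v).
by rewrite adjmx_mul adjmxK !mulmxA.
Qed.

Lemma psd_rank1 n (w : 'cV[C]_n) : psd (w *m adjmx w).
Proof.
split; first by rewrite adjmx_mul adjmxK.
move=> v; rewrite !mulmxA -mulmxA -{2}(adjmxK v) -adjmx_mul.
set u := adjmx v *m w.
rewrite mxE big_ord1 adjmxE; first [exact: cmul_ge0 | exact: mulcJ_ge0].
Qed.

Lemma adj_delta p q (i : 'I_p) (j : 'I_q) :
  adjmx (delta_mx i j : 'M[C]_(p, q)) = delta_mx j i.
Proof.
apply/matrixP => a b; rewrite !mxE.
by case: (b == i); case: (a == j); rewrite ?andbT ?andbF; [exact: conjc1 | exact: conjc0 ..].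
Qed.

Lemma quad_delta n (A : 'M[C]_n) i :
  (adjmx (delta_mx i 0 : 'cV[C]_n) *m A *m (delta_mx i 0 : 'cV[C]_n)) 0 0 = A i i.
Proof. by rewrite adj_delta -rowE -colE !mxE. Qed.

Lemma psd_diag_ge0 n (A : 'M[C]_n) i : psd A -> 0 <= A i i.
Proof. by move=> [_ qA]; have := qA (delta_mx i 0); rewrite quad_delta.
Qed.


Lemma adj_mxdiag k n (K : 'I_k -> 'M[C]_n) :
  adjmx (\mxdiag_(i < k) K i) = \mxdiag_(i < k) adjmx (K i).
Proof.
apply/matrixP => a b; rewrite !mxE.
case: (eqVneq (tagnat.sig1 b) (tagnat.sig1 a)) => [e|ne].
  by rewrite e !conform_mx_id !mxE.
by rewrite !mxE; exact: conjc0.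
Qed.

Lemma cp_kraus n (I : finType) (K : I -> 'M[C]_n) :
  completely_positive (fun X => \sum_l K l *m X *m adjmx (K l)).
Proof.
move=> k X hX; rewrite mxblock_sum; apply: psd_sum => l.
rewrite -mul_mxblock_mxdiag -mul_mxdiag_mxblock -adj_mxdiag.
exact: psd_congr.
Qed.

Lemma cp_add n (E1 E2 : 'M[C]_n -> 'M[C]_n) :
  completely_positive E1 -> completely_positive E2 ->
  completely_positive (fun X => E1 X + E2 X).
Proof. by move=> h1 h2 k X hX; rewrite mxblockD; apply: psdD; [apply: h1|apply: h2]. Qed.

Lemma cp_ext n (E1 E2 : 'M[C]_n -> 'M[C]_n) :
  (forall X, E1 X = E2 X) -> completely_positive E2 -> completely_positive E1.
Proof.
move=> e h k X hX; have -> : \mxblock_(i < k, j < k) E1 (X i j) = \mxblock_(i < k, j < k) E2 (X i j).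
  by apply: eq_mxblock => i j; rewrite e.
exact: h.
Qed.


Lemma adj_mxcol k n p (u : 'I_k -> 'M[C]_(n, p)) :
  adjmx (\mxcol_(i < k) u i) = \mxrow_(i < k) adjmx (u i).
Proof. by apply/matrixP => a b; rewrite !mxE. Qed.

Lemma block_quad k n (B : 'I_k -> 'I_k -> 'M[C]_n) (u : 'I_k -> 'cV[C]_n) :
  psd (\mxblock_(i < k, j < k) B i j) ->
  0 <= (\sum_i \sum_j adjmx (u i) *m B i j *m u j) 0 0.
Proof.
move=> [_ q]; have := q (\mxcol_i u i).
rewrite adj_mxcol mul_mxrow_mxblock mul_mxrow_mxcol.
rewrite (eq_bigr (fun j => \sum_i adjmx (u i) *m B i j *m u j)); last first.
  by move=> j _; rewrite mulmx_suml.
by rewrite exchange_big.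
Qed.

Lemma choi_psd n (E : 'M[C]_n -> 'M[C]_n) : completely_positive E ->
  psd (\mxblock_(i < n, j < n) E (delta_mx i j)).
Proof.
move=> cp; apply: cp.
have -> : \mxblock_(i < n, j < n) (delta_mx i j : 'M[C]_n) =
  (\mxcol_(i < n) (delta_mx i 0 : 'cV[C]_n)) *m adjmx (\mxcol_(i < n) (delta_mx i 0 : 'cV[C]_n)).
  rewrite adj_mxcol mul_mxcol_mxrow; apply: eq_mxblock => i j.
  by rewrite adj_delta mul_delta_mx.
exact: psd_rank1.
Qed.


Lemma expiJ (t : R) : conjc (expi t) = expi (- t).
Proof. by rewrite /expi cosN sinN. Qed.

Lemma expiD (x y : R) : expi (x + y) = expi x * expi y.
Proof.
rewrite /expi cosD sinD; apply/eqP; rewrite eq_complex /=; apply/andP; split; apply/eqP.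
  by [].
by rewrite addrC mulrC [sin y * _]mulrC.
Qed.

Lemma expi0 : expi (0 : R) = 1.
Proof. by rewrite /expi cos0 sin0. Qed.

Lemma expi_neq0 (t : R) : expi t != 0.
Proof.
apply/negP => /eqP h; have : expi (t + - t) = 1 by rewrite subrr expi0.
by rewrite expiD h mul0r => /eqP; rewrite eq_sym oner_eq0.
Qed.

Lemma expiDpi (t : R) : expi (t + pi) = - expi t.
Proof. by rewrite /expi cosDpi sinDpi. Qed.


Lemma psd_scale n (A : 'M[C]_n) (c : C) : 0 <= c -> psd A -> psd (c *: A).
Proof.
move=> c0 [hA qA]; have cc : conjc c = c := geC0_conj c0.
split; first by rewrite adjmxZ cc hA.
move=> v; rewrite -scalemxAr -scalemxAl [X in 0 <= X]mxE; exact: mulr_ge0.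
Qed.

Lemma tr_rank1 n (w : 'cV[C]_n) : \tr (w *m adjmx w) = (adjmx w *m w) 0 0.
Proof. by rewrite mxtrace_mulC /mxtrace big_ord1. Qed.

Lemma density_rank1 n (w : 'cV[C]_n) : (adjmx w *m w) 0 0 = 1 -> density (w *m adjmx w).
Proof. by move=> h; split; [exact: psd_rank1 | rewrite tr_rank1]. Qed.

Lemma evol_entry n (a : 'I_n -> R) t (X : 'M[C]_n) y w :
  (evol a t *m X *m adjmx (evol a t)) y w = expi (- (a y * t)) * X y w * expi (a w * t).
Proof. by rewrite /evol adj_diag mul_diag_mx mul_mx_diag !mxE expiJ opprK. Qed.


Definition covP n (a : 'I_n -> R) (E : 'M[C]_n -> 'M[C]_n) X :=
  forall t, E (evol a t *m X *m adjmx (evol a t)) = evol a t *m E X *m adjmx (evol a t).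

Section CovP.
Variables (n : nat) (a : 'I_n -> R) (E : {linear 'M[C]_n -> 'M[C]_n}).

Lemma covP_add X Y : covP a E X -> covP a E Y -> covP a E (X + Y).
Proof.
move=> hX hY t; rewrite mulmxDr mulmxDl !linearD /= hX hY.
by rewrite ?mulmxDr mulmxDl.
Qed.

Lemma covP_scale c X : covP a E X -> covP a E (c *: X).
Proof.
move=> hX t; rewrite -scalemxAr -scalemxAl !linearZ /= hX.
by rewrite scalemxAl.
Qed.

Lemma covP_sub X Y : covP a E X -> covP a E Y -> covP a E (X - Y).
Proof. by move=> hX hY; apply: covP_add => //; rewrite -scaleN1r; apply: covP_scale. Qed.

Lemma covP_density X : tt_covariant a E -> density X -> covP a E X.
Proof. by move=> cov dX t; apply: cov. Qed.

Lemma covP_delta p q : tt_covariant a E -> covP a E (delta_mx p q).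
Proof.
move=> cov.
have dd : forall p, density (delta_mx p p : 'M[C]_n).
  move=> p'; have -> : (delta_mx p' p' : 'M[C]_n) = (delta_mx p' 0 : 'cV[C]_n) *m adjmx (delta_mx p' 0 : 'cV[C]_n).
    by rewrite adj_delta mul_delta_mx.
  by apply: density_rank1; rewrite adj_delta mul_delta_mx mxE !eqxx.
case: (eqVneq p q) => [<-|pq]; first exact: covP_density.
pose w (c : C) : 'cV[C]_n := delta_mx p 0 + c *: delta_mx q 0.
pose W c := w c *m adjmx (w c).
have Wexp : forall c, W c = delta_mx p p + conjc c *: delta_mx p q + c *: delta_mx q p
    + (c * conjc c) *: delta_mx q q.
  move=> c; rewrite /W /w adjmxD adjmxZ !adj_delta mulmxDl !mulmxDr.
  rewrite -!scalemxAl -!scalemxAr !mul_delta_mx scalerA.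
  by rewrite !addrA.
have covW : forall c, conjc c * c = 1 -> covP a E (W c).
  move=> c hc.
  have h2 : (2 : C) != 0 by rewrite pnatr_eq0.
  have -> : W c = 2 *: (2^-1 *: W c) by rewrite scalerA mulfV ?scale1r.
  apply: covP_scale; apply: covP_density => //; split.
    by apply: psd_scale; [rewrite invr_ge0 ler0n | exact: psd_rank1].
  rewrite mxtraceZ tr_rank1 /w adjmxD adjmxZ !adj_delta mulmxDl !mulmxDr.
  rewrite -!scalemxAl -!scalemxAr !mul_delta_mx !mul_delta_mx_0 // 1?eq_sym //.
  rewrite !scaler0 addr0 add0r scalerA hc scale1r !mxE eqxx /=.
  exact: mulVf h2.
have ci : conjc 'i%C = - 'i%C :> C by apply/eqP; rewrite eq_complex /= oppr0 !eqxx.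
have ii : 'i%C * 'i%C = -1 :> C by rewrite -expr2 sqr_i.
have c1 : conjc 1 = 1 :> C by exact: conjc1.
have key : (2 : C) *: delta_mx p q = (W 1 - delta_mx p p - delta_mx q q)
    + 'i%C *: (W 'i%C - delta_mx p p - delta_mx q q).
  rewrite !Wexp ci c1; apply/matrixP => x y; rewrite !mxE.
  set e1 := ((x == p) && (y == p))%:R; set e2 := ((x == p) && (y == q))%:R.
  set e3 := ((x == q) && (y == p))%:R; set e4 := ((x == q) && (y == q))%:R.
  clearbody e1 e2 e3 e4.
  transitivity (e2 + e2 + (1 + 'i%C * 'i%C) * (-e2 + e3 - 'i%C * e4)).
    by rewrite ii subrr mul0r addr0; ring.
  by ring.
have h2 : (2 : C) != 0 by rewrite pnatr_eq0.
have -> : (delta_mx p q : 'M[C]_n) = 2^-1 *: (2 *: delta_mx p q) by rewrite scalerA mulVf ?scale1r.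
rewrite key; apply: covP_scale; apply: covP_add; last apply: covP_scale.
  apply: covP_sub; [apply: covP_sub|]; try exact: covP_density.
  by apply: covW; rewrite c1 mulr1.
apply: covP_sub; [apply: covP_sub|]; try exact: covP_density.
by apply: covW; rewrite ci mulNr ii opprK.
Qed.


Lemma evol_delta t p q : evol a t *m delta_mx p q *m adjmx (evol a t) =
  (expi (- (a p * t)) * expi (a q * t)) *: (delta_mx p q : 'M[C]_n).
Proof.
apply/matrixP => u v; rewrite evol_entry !mxE.
case: (eqVneq u p) => [->|up]; case: (eqVneq v q) => [->|vq];
  by rewrite /= ?mulr1 ?mulr0 ?mul0r ?andbF ?andbT ?mulr1.
Qed.

Lemma cov_zero p q x y : tt_covariant a E -> a p - a q != a x - a y ->
  E (delta_mx p q) x y = 0.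
Proof.
move=> cov hne; set d := (a p - a q) - (a x - a y).
have d0 : d != 0 by rewrite subr_eq0.
pose t := pi / d.
have h := covP_delta p q cov t.
rewrite evol_delta linearZ /= in h.
have := congr1 (fun M : 'M[C]_n => M x y) h; rewrite /= evol_entry mxE.
set M := E (delta_mx p q) x y.
have ht : - (a x * t) + a y * t = (- (a p * t) + a q * t) + pi.
  have -> : pi = d * t by rewrite /t mulrC divfK.
  rewrite /d; ring.
rewrite -expiD -[expi (- _) * M * _]mulrAC -expiD ht expiDpi mulNr.
move=> /eqP; rewrite -subr_eq0 opprK -mulr2n mulrn_eq0 /= mulf_eq0 (negbTE (expi_neq0 _)) /=.
by move/eqP.
Qed.

End CovP.


Lemma quad_sum n (A : 'M[C]_n) (v : 'cV[C]_n) :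
  (adjmx v *m A *m v) 0 0 = \sum_i \sum_j conjc (v i 0) * v j 0 * A i j.
Proof.
rewrite mxE exchange_big /=; apply: eq_bigr => i _.
rewrite mxE big_distrl /=; apply: eq_bigr => j _.
by rewrite adjmxE mulrAC.
Qed.

Lemma quad_delta2 n (B : 'M[C]_n) (c d : C) (x y : 'I_n) :
  (adjmx (c *: (delta_mx x 0 : 'cV[C]_n)) *m B *m (d *: (delta_mx y 0 : 'cV[C]_n))) 0 0
  = conjc c * d * B x y.
Proof.
rewrite adjmxZ adj_delta -scalemxAl -scalemxAr -rowE -colE !mxE.
by rewrite mulrA [d * _]mulrC.
Qed.

Lemma choi_coef k n (B : 'I_k -> 'I_k -> 'M[C]_n) (v : 'I_k -> C) (f : 'I_k -> 'I_n) :
  psd (\mxblock_(i < k, j < k) B i j) ->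
  0 <= \sum_i \sum_j conjc (v i) * v j * B i j (f i) (f j).
Proof.
move=> h; have := block_quad (fun i => v i *: (delta_mx (f i) 0 : 'cV[C]_n)) h.
rewrite summxE; under eq_bigr do rewrite summxE.
by under eq_bigr do under eq_bigr do rewrite quad_delta2.
Qed.

Lemma sum_single n (F : 'I_n -> 'I_n -> C) x y :
  (forall p q, (p != x) || (q != y) -> F p q = 0) -> \sum_p \sum_q F p q = F x y.
Proof.
move=> H; rewrite (bigD1 x) //= (bigD1 y) //= big1 ?addr0; last first.
  by move=> q qy; apply: H; rewrite qy orbT.
rewrite big1 ?addr0 // => p px; apply: big1 => q _; apply: H; by rewrite px.
Qed.

Lemma sum_diag n (F : 'I_n -> 'I_n -> C) :
  (forall p q, p != q -> F p q = 0) -> \sum_p \sum_q F p q = \sum_p F p p.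
Proof.
move=> H; apply: eq_bigr => p _; rewrite (bigD1 p) //= big1 ?addr0 //.
by move=> q qp; apply: H; rewrite eq_sym.
Qed.

Lemma lin_entry n (E : {linear 'M[C]_n -> 'M[C]_n}) (X : 'M[C]_n) x y :
  E X x y = \sum_p \sum_q X p q * E (delta_mx p q) x y.
Proof.
rewrite {1}(matrix_sum_delta X) linear_sum summxE; apply: eq_bigr => p _.
rewrite linear_sum summxE; apply: eq_bigr => q _.
by rewrite linearZ mxE.
Qed.


Lemma tr_delta n (x : 'I_n) : \tr (delta_mx x x : 'M[C]_n) = 1.
Proof.
rewrite /mxtrace (bigD1 x) //= mxE !eqxx big1 ?addr0 // => i ix.
by rewrite mxE (negbTE ix).
Qed.

Lemma forward n (a : 'I_n -> R) (r s : 'M[C]_n) (E : {linear 'M[C]_n -> 'M[C]_n}) :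
  nondeg_bohr a -> density r -> density s -> (forall x x', r x x' != 0) ->
  channel E -> tt_covariant a E -> E r = s -> psd (Qmx r s).
Proof.
move=> nd [pr tr] [ps ts] rnz [cp tp] cov Ers.
pose M x y := E (delta_mx x y) x y.
have choi := choi_psd cp.
have Mpsd : forall v : 'I_n -> C, 0 <= \sum_i \sum_j conjc (v i) * v j * M i j.
  by move=> v; exact: (choi_coef v id choi).
have Ediag : forall p x, 0 <= E (delta_mx p p) x x.
  move=> p x; have := choi_coef (fun i => ((i == p)%:R : C)) (fun _ => x) choi.
  rewrite (@sum_single _ _ p p); first by rewrite eqxx conjc_nat !mul1r.
  by move=> i j /orP [] /negbTE ->; rewrite ?conjc_nat !(mul0r, mulr0).
have offd : forall x y, x != y -> s x y = r x y * M x y.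
  move=> x y xy; rewrite -Ers lin_entry (@sum_single _ _ x y) // => p q h.
  rewrite (cov_zero cov) ?mulr0 //; apply/eqP => /nd [[px qy]|[_ xy']].
    by move: h; rewrite px qy !eqxx.
  by move: xy; rewrite xy' eqxx.
have diagE : forall x, s x x = \sum_p r p p * E (delta_mx p p) x x.
  move=> x; rewrite -Ers lin_entry sum_diag // => p q pq.
  rewrite (cov_zero cov) ?mulr0 //; apply/eqP => /nd [[px qx]|[pq' _]].
    by move: pq; rewrite px qx eqxx.
  by move: pq; rewrite pq' eqxx.
have rpos : forall x, 0 < r x x by move=> x; rewrite lt_def rnz psd_diag_ge0.
have Mle1 : forall x, M x x <= 1.
  move=> x; have := tp (delta_mx x x); rewrite tr_delta /mxtrace => <-.
  rewrite (bigD1 x) //= lerDl; apply: sumr_ge0 => y _; exact: Ediag.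
have Mles : forall x, r x x * M x x <= s x x.
  move=> x; rewrite diagE (bigD1 x) //= lerDl; apply: sumr_ge0 => p _.
  by apply: mulr_ge0; [exact: psd_diag_ge0 | exact: Ediag].
have Qoff : forall x y, x != y -> Qmx r s x y = M x y.
  by move=> x y xy; rewrite mxE (negbTE xy) offd // [r x y * _]mulrC mulfK.
have QM : forall x, M x x <= Qmx r s x x.
  move=> x; rewrite mxE eqxx /Order.min; case: ifP => _; first exact: Mle1.
  by rewrite ler_pdivlMr // mulrC.
have Qge0 : forall x, 0 <= Qmx r s x x.
  move=> x; rewrite mxE eqxx /Order.min; case: ifP => _; first exact: ler01.
  by apply: divr_ge0; [exact: psd_diag_ge0 | exact: ltW].
have herm : forall (A : 'M[C]_n), adjmx A = A -> forall x y, conjc (A y x) = A x y.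
  by move=> A hA x y; rewrite -[in RHS]hA adjmxE.
split.
  apply/matrixP => x y; rewrite adjmxE; case: (eqVneq x y) => [->|xy].
    exact: (geC0_conj (Qge0 y)).
  rewrite !mxE (negbTE xy) eq_sym (negbTE xy) fmorph_div.
  congr (_ / _); first exact: (herm _ ps.1 x y). exact: (herm _ pr.1 x y).
move=> v; rewrite quad_sum.
have -> : \sum_i \sum_j conjc (v i 0) * v j 0 * Qmx r s i j =
    \sum_i \sum_j conjc (v i 0) * v j 0 * M i j +
    \sum_i \sum_j (conjc (v i 0) * v j 0 * (((i == j)%:R : C) * (Qmx r s i i - M i i))).
  rewrite -big_split; apply: eq_bigr => i _; rewrite -big_split; apply: eq_bigr => j _ /=.
  rewrite -mulrDr; congr (_ * _); case: (eqVneq i j) => [->|ij].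
    by rewrite mul1r addrC subrK.
  by rewrite mul0r addr0 Qoff.
apply: addr_ge0; first exact: (Mpsd (fun i => v i 0)).
rewrite sum_diag; last by move=> i j ij; rewrite (negbTE ij) mul0r mulr0.
apply: sumr_ge0 => i _; rewrite eqxx mul1r; apply: mulr_ge0; first exact: cmul_ge0.
by rewrite subr_ge0.
Qed.


Local Open Scope sesquilinear_scope.
Lemma psd_gram n (Q : 'M[C]_n) : psd Q ->
  exists b : 'I_n -> 'I_n -> C, forall z w, Q z w = \sum_l b l z * conjc (b l w).
Proof.
move=> [hQ qQ].
have hermQ : Q \is hermsymmx.
  apply/is_hermitianmxP; rewrite expr0 scale1r; apply/matrixP => i j.
  by rewrite -[in LHS]hQ !mxE.
have /orthomx_spectralP QE := hermitian_normalmx hermQ.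
set P := spectralmx Q in QE; set d := spectral_diag Q in QE.
have Pu : P \is unitarymx by exact: spectral_unitarymx.
rewrite invmx_unitary // in QE.
have PP : P *m P ^t* = 1%:M by exact/unitarymxP.
have dge0 : forall l, 0 <= d 0 l.
  move=> l; have := qQ (P ^t* *m (delta_mx l 0 : 'cV[C]_n)).
  have -> : adjmx (P ^t* *m (delta_mx l 0 : 'cV[C]_n)) = delta_mx 0 l *m P.
    rewrite adjmx_mul adj_delta; congr (_ *m _); apply/matrixP => i j.
    by rewrite !mxE; exact: conjCK.
  rewrite QE !mulmxA !mulmxtVK //.
  by rewrite -rowE -colE !mxE eqxx mulr1n.
exists (fun l z => conjc (P l z) * sqrtC (d 0 l)) => z w.
rewrite {1}QE mxE; apply: eq_bigr => l _.
rewrite mxE (bigD1 l) //= big1 ?addr0; last first.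
  by move=> k kl; rewrite !mxE (negbTE kl) mulr0n mulr0.
rewrite !mxE eqxx mulr1n conjcM conjcK.
have sr : conjc (sqrtC (d 0 l)) = sqrtC (d 0 l).
  by apply: geC0_conj; rewrite sqrtC_ge0.
rewrite sr -[d 0 l in LHS]sqrtCK expr2.
ring.
Qed.

End Basic.

Definition Emap (R : realType) (n : nat) (Q : 'M[R[i]]_n) (c g : 'I_n -> R[i])
  (G : R[i]) (X : 'M[R[i]]_n) : 'M[R[i]]_n :=
  \matrix_(y, w) (Q y w * X y w) + ((\sum_x c x * X x x) / G) *: diag_mx (\row_y g y).

Fact Emap_lin (R : realType) (n : nat) (Q : 'M[R[i]]_n) (c g : 'I_n -> R[i]) (G : R[i]) :
  linear (Emap Q c g G).
Proof.
move=> k X Y; apply/matrixP => y w; rewrite /Emap !mxE.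
have -> : \sum_x c x * (k *: X + Y) x x = k * \sum_x c x * X x x + \sum_x c x * Y x x.
  by rewrite mulr_sumr -big_split; apply: eq_bigr => x _; rewrite /= !mxE; ring.
ring.
Qed.

HB.instance Definition _ (R : realType) (n : nat) (Q : 'M[R[i]]_n) (c g : 'I_n -> R[i]) (G : R[i]) :=
  GRing.isLinear.Build R[i] 'M[R[i]]_n 'M[R[i]]_n *:%R (Emap Q c g G) (Emap_lin Q c g G).

Section Back.
Variable R : realType.
Local Notation C := (R[i]).

Lemma Emap_entry n (Q : 'M[C]_n) c g G X y w :
  Emap Q c g G X y w = Q y w * X y w + (\sum_x c x * X x x) / G * (g y *+ (y == w)).
Proof. by rewrite /Emap !mxE. Qed.

Lemma delta_conj n (X : 'M[C]_n) y x :
  delta_mx y x *m X *m delta_mx x y = X x x *: (delta_mx y y : 'M[C]_n).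
Proof.
rewrite -(mul_delta_mx (0 : 'I_1) y x) -(mul_delta_mx (0 : 'I_1) x y).
rewrite !mulmxA -(mulmxA _ _ X) -rowE -!mulmxA (mulmxA (row x X)) -colE.
rewrite [col x (row x X)]mx11_scalar !mxE mul_scalar_mx -scalemxAr.
by rewrite mul_delta_mx.
Qed.


Lemma backward n (a : 'I_n -> R) (r s : 'M[C]_n) :
  density r -> density s -> (forall x x', r x x' != 0) -> psd (Qmx r s) ->
  exists E : {linear 'M[C]_n -> 'M[C]_n}, channel E /\ tt_covariant a E /\ E r = s.
Proof.
move=> [pr tr] [ps ts] rnz hQ.
set Q := Qmx r s.
pose q x := Q x x.
pose c x := 1 - q x.
pose g x := s x x - q x * r x x.
pose G := \sum_x g x.
have rpos : forall x, 0 < r x x by move=> x; rewrite lt_def rnz psd_diag_ge0.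
have sge0 : forall x, 0 <= s x x by move=> x; exact: psd_diag_ge0.
have facts : forall x, [/\ 0 <= c x, 0 <= g x & c x * g x = 0].
  move=> x; rewrite /c /g /q /Q mxE eqxx /Order.min; case: ifP => h.
    split; [by rewrite subrr | | by rewrite subrr mul0r].
    by move: h; rewrite ltr_pdivlMr // mul1r => h; rewrite subr_ge0 ltW.
  have zr : s x x / r x x \is Num.real.
    by apply: ger0_real; apply: divr_ge0 => //; exact: ltW.
  have le1 : s x x / r x x <= 1 by rewrite (real_leNgt zr (real1 _)) h.
  split; first by rewrite subr_ge0.
    by rewrite divfK ?rnz // subrr.
  by rewrite divfK ?rnz // subrr mulr0.
have c0 : forall x, 0 <= c x by move=> x; case: (facts x).
have g0 : forall x, 0 <= g x by move=> x; case: (facts x).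
have st : \sum_x s x x = 1 by exact: ts.
have rt : \sum_x r x x = 1 by exact: tr.
have Gdef : G = \sum_x c x * r x x.
  rewrite /G /g /c sumrB; under [RHS]eq_bigr do rewrite mulrBl mul1r.
  by rewrite sumrB st rt.
have Gge0 : 0 <= G by apply: sumr_ge0 => x _; case: (facts x).
have G0 : G = 0 -> forall x, c x = 0 /\ g x = 0.
  move=> h x; split.
    have /eqP := @psumr_eq0P _ _ xpredT (fun x => c x * r x x)
      (fun i _ => mulr_ge0 (c0 i) (ltW (rpos i))) (etrans (esym Gdef) h) x isT.
    by rewrite mulf_eq0 (negbTE (rnz x x)) orbF => /eqP.
  exact: (@psumr_eq0P _ _ xpredT g (fun i _ => g0 i) h x isT).
have divK0 : forall S, (G = 0 -> S = 0) -> S / G * G = S.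
  move=> S hS; case: (eqVneq G 0) => [h|h]; first by rewrite (hS h) h mulr0.
  by rewrite divfK.
have Sr : forall X : 'M[C]_n, G = 0 -> \sum_x c x * X x x = 0.
  by move=> X h; apply: big1 => x _; rewrite (G0 h x).1 mul0r.
have [b hb] := psd_gram hQ.
pose bd l := diag_mx (\row_z b l z).
pose kap (p : 'I_n * 'I_n) := sqrtC (g p.1 * c p.2 / G).
pose K p := kap p *: (delta_mx p.1 p.2 : 'M[C]_n).
have kapK : forall p, kap p * conjc (kap p) = g p.1 * c p.2 / G.
  move=> p; have h0 : 0 <= g p.1 * c p.2 / G by apply: divr_ge0 => //; exact: mulr_ge0.
  have -> : conjc (kap p) = kap p by apply: geC0_conj; rewrite sqrtC_ge0.
  by rewrite -expr2 sqrtCK.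
exists (Emap Q c g G : {linear _ -> _}); split; [split | split].
- apply: (cp_ext (E2 := fun X => (\sum_l bd l *m X *m adjmx (bd l)) +
      (\sum_p K p *m X *m adjmx (K p)))); last by apply: cp_add; apply: cp_kraus.
  move=> X; apply/matrixP => u v; rewrite Emap_entry [RHS]mxE !summxE.
  have e1 : \sum_k (bd k *m X *m adjmx (bd k)) u v = Q u v * X u v.
    rewrite /Q hb mulr_suml; apply: eq_bigr => l _.
    by rewrite /bd adj_diag mul_diag_mx mul_mx_diag !mxE; ring.
  have Kp : forall p, K p *m X *m adjmx (K p) = (g p.1 * c p.2 / G * X p.2 p.2) *: delta_mx p.1 p.1.
    move=> p; rewrite /K adjmxZ adj_delta -scalemxAl -!scalemxAr -scalemxAl delta_conj !scalerA.
    by congr (_ *: _); rewrite -kapK; ring.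
  have e2 : \sum_k (K k *m X *m adjmx (K k)) u v =
      (\sum_x c x * X x x) / G * (g u *+ (u == v)).
    under eq_bigr => p _ do rewrite Kp mxE.
    transitivity (\sum_y \sum_x (g y * c x / G * X x x) * ((u == y) && (v == y))%:R);
      first by rewrite pair_bigA; apply: eq_bigr => p _; rewrite mxE.
    rewrite (bigD1 u) //= [X in _ + X = _]big1 ?addr0; last first.
      move=> y yu; apply: big1 => x _.
      by rewrite eq_sym (negbTE yu) /= ?mulr0n ?mulr0.
    rewrite eqxx /= eq_sym; case: (u == v).
      by rewrite !mulr_suml; apply: eq_bigr => x _; ring.
    by rewrite big1 ?mulr0n ?mulr0 // => x _; rewrite mulr0.
  by rewrite e1 e2.
- move=> X; rewrite /mxtrace; under eq_bigr do rewrite Emap_entry eqxx mulr1n.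
  rewrite big_split /= -mulr_sumr -/G divK0; last exact: Sr.
  rewrite -big_split; apply: eq_bigr => i _; rewrite /c /q /=; ring.
- move=> t rho _; apply/matrixP => y w; rewrite evol_entry !Emap_entry evol_entry.
  have hz : forall x (z : C), expi (- (a x * t)) * z * expi (a x * t) = z.
    by move=> x z; rewrite mulrAC -expiD addNr expi0 mul1r.
  have -> : \sum_x c x * (evol a t *m rho *m adjmx (evol a t)) x x = \sum_x c x * rho x x.
    by apply: eq_bigr => x _; rewrite evol_entry hz.
  case: (eqVneq y w) => [<-|yw]; first by rewrite !hz.
  by rewrite !mulr0n !mulr0 !addr0; ring.
- apply/matrixP => y w; rewrite Emap_entry -Gdef; case: (eqVneq y w) => [<-|yw].
    have -> : G / G * (g y *+ 1) = g y.
      rewrite mulr1n; case: (eqVneq G 0) => [h|h]; first by rewrite (G0 h y).2 mulr0.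
      by rewrite mulfV ?mul1r.
    by rewrite /g /q addrC subrK.
  by rewrite mulr0n mulr0 addr0 /Q mxE (negbTE yw) divfK.
Qed.

End Back.

Unset Implicit Arguments.

Theorem theorem3 (R : realType) (m : nat) (a : 'I_m -> R)
    (rho sigma : 'M[R[i]]_m) :
  nondeg_bohr a ->
  density rho -> density sigma ->
  (forall x x' : 'I_m, rho x x' != 0) ->
  (exists E : {linear 'M[R[i]]_m -> 'M[R[i]]_m},
      channel E /\ tt_covariant a E /\ E rho = sigma)
  <-> psd (Qmx rho sigma).
Proof.
move=> nd dr ds rnz; split.
  by move=> [E [ch [cov Ers]]]; exact: (forward nd dr ds rnz ch cov Ers).
exact: backward.
Qed.
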